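(* Let $\mathcal{A}$ be finite, $p\in\Delta_{\mathcal{A}}$ of full support, $\mathcal{E}$ an exponential family, and $q(T|A)\in C(\mathcal{A},\mathcal{T})$. Then $D(q(T)\|\tilde q(T))\le\Lambda:=D(p\|\tilde p)$, and the following are equivalent: (i) $D(q(T)\|\tilde q(T))=\Lambda$; (ii) for every $t\in\mathrm{supp}(q(T))$ there exists $\mathcal{A}_j\in\bar{\mathcal{A}}$ with $\mathcal{A}^q_t\subseteq\mathcal{A}_j$; (iii) the channel $\bar q\in C(\bar{\mathcal{A}},\mathcal{T})$ is congruent.
   Context: $\mathcal{T}=\mathbb{N}$. $\tilde p$ is the unique minimiser of $D(p\|r)$ over the closure of $\mathcal{E}$ (here of full support). $\bar{\mathcal{A}}=\{\mathcal{A}_j\}_j$ is the partition for $a\sim a'\iff p(a)\tilde p(a')=p(a')\tilde p(a)$. $q(t)=\sum_ap(a)q(t|a)$, $\tilde q(t)=\sum_a\tilde p(a)q(t|a)$, $\mathcal{A}^q_t:=\{a:q(t|a)>0\}$, $\bar q(t|\mathcal{A}_j):=\frac{\sum_{a\in\mathcal{A}_j}q(t|a)p(a)}{p(\mathcal{A}_j)}$. A channel $\gamma\in C(\mathcal{B},\mathcal{T})$ is congruent if there is a function $f:\mathcal{T}\to\mathcal{B}$ with $f\circ\gamma=e_{\mathcal{B}}$. *)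

(* Defs.v *)
From mathcomp Require Import all_boot all_order all_algebra.
From mathcomp Require Import boolp classical_sets filter reals ereal topology
  normedtype sequences exp.
Set Implicit Arguments. Unset Strict Implicit. Unset Printing Implicit Defensive.
Import Order.TTheory GRing.Theory Num.Theory numFieldNormedType.Exports.
Local Open Scope ring_scope.

Section Defs.
Variable R : realType.

Definition klterm (x y : R) : \bar R :=
  if x == 0 then 0%E else if y == 0 then +oo%E else (x * ln (x / y))%:E.

Definition KL (A : finType) (P Q : A -> R) : \bar R :=
  (\sum_(a : A) klterm (P a) (Q a))%E.

Definition KLnat (P Q : nat -> R) : \bar R :=
  (\sum_(0 <= t <oo) klterm (P t) (Q t))%E.

Definition is_dist (A : finType) (P : A -> R) :=
  (forall a, 0 <= P a) /\ \sum_(a : A) P a = 1.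

Definition sums_to (u : nat -> R) (l : R) :=
  ((fun n => \sum_(0 <= t < n) u t) @ \oo --> l)%classic.

Definition is_channel (A : finType) (q : A -> nat -> R) :=
  forall a, (forall t, 0 <= q a t) /\ sums_to (q a) 1.

Definition expfam_member (A : finType) (d : nat) (nu : A -> R)
    (phi : 'I_d -> A -> R) (theta : 'I_d -> R) : A -> R :=
  fun a => nu a * expR (\sum_(i < d) theta i * phi i a) /
           \sum_(b : A) nu b * expR (\sum_(i < d) theta i * phi i b).

Definition in_expfam (A : finType) (d : nat) (nu : A -> R)
    (phi : 'I_d -> A -> R) (r : A -> R) :=
  exists theta : 'I_d -> R, r = expfam_member nu phi theta.

Definition in_closure (A : finType) (E : (A -> R) -> Prop) (r : A -> R) :=
  forall eps : R, 0 < eps -> exists r', E r' /\ forall a, `|r a - r' a| < eps.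

Definition simr (A : finType) (p pt : A -> R) (a a' : A) : bool :=
  p a * pt a' == p a' * pt a.

Definition blocks (A : finType) (p pt : A -> R) : {set {set A}} :=
  [set [set a' | simr p pt a a'] | a : A].

Definition outdist (A : finType) (P : A -> R) (q : A -> nat -> R) (t : nat) : R :=
  \sum_(a : A) P a * q a t.

Definition supp_at (A : finType) (q : A -> nat -> R) (t : nat) : {set A} :=
  [set a | 0 < q a t].

Definition qbar (A : finType) (p : A -> R) (q : A -> nat -> R)
    (B : {set A}) (t : nat) : R :=
  (\sum_(a in B) q a t * p a) / (\sum_(a in B) p a).

(* a channel g in C(Bs, nat) (inputs: the elements of the finite set Bs) is
   congruent if some f : nat -> Bs satisfies f o g = identity channel on Bs,
   i.e. sum_{t : f t = B'} g(t|B) = [B = B'] *)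
Definition congruent_on (X : finType) (Bs : {set X}) (g : X -> nat -> R) :=
  exists f : nat -> X, (forall t, f t \in Bs) /\
    forall B B', B \in Bs -> B' \in Bs ->
      sums_to (fun t => if f t == B' then g B t else 0) (B == B')%:R.

End Defs.

(* Main.v *)
Require Import Defs.
From mathcomp Require Import all_boot all_order all_algebra.
From mathcomp Require Import boolp classical_sets filter reals ereal topology
  normedtype sequences exp.
From mathcomp Require Import ring lra.
Import Order.TTheory GRing.Theory Num.Theory numFieldNormedType.Exports.
Set Implicit Arguments. Unset Strict Implicit.
Local Open Scope ring_scope.

Section Aux.
Variable R : realType.

Definition phiL (y : R) := y - 1 - ln y.

Lemma phiL_ge0 y : 0 < y -> 0 <= phiL y.
Proof.
move=> y0; rewrite /phiL.
have := @le_ln1Dx R (y - 1); rewrite [1 + _]addrC subrK => H.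
have := H (ltac:(lra)); lra.
Qed.

Lemma phiL_eq0 y : 0 < y -> phiL y = 0 -> y = 1.
Proof.
move=> y0 h; apply/eqP; apply: contraT => yn1.
have x0 : y - 1 != 0 by rewrite subr_eq0.
have := expR_gt1Dx x0; rewrite [1 + _]addrC subrK => Hl.
have : ln y < y - 1.
  by rewrite -[X in _ < X]expRK ltr_ln ?posrE ?expR_gt0.
move: h; rewrite /phiL; lra.
Qed.

Lemma le_ln_sub1 (y : R) : 0 < y -> ln y <= y - 1.
Proof. by move=> y0; have := @phiL_ge0 y y0; rewrite /phiL; lra. Qed.

Lemma cvg_bigsum (I : Type) (r : seq I) (P : pred I) (u : I -> nat -> R)
  (l : I -> R) :
  (forall i, P i -> (u i @ \oo --> l i)%classic) ->
  ((fun n => \sum_(i <- r | P i) u i n) @ \oo --> \sum_(i <- r | P i) l i)%classic.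
Proof.
move=> H; elim: r => [|x r IH].
  under eq_fun do rewrite big_nil. by rewrite big_nil; exact: cvg_cst.
under eq_fun do rewrite big_cons. rewrite big_cons.
case: (boolP (P x)) => Px //.
exact: cvgD (H x Px) IH.
Qed.

Lemma psum_nd (u : nat -> R) : (forall t, 0 <= u t) ->
  {homo (fun n => \sum_(0 <= t < n) u t) : n m / (n <= m)%N >-> n <= m}.
Proof.
move=> u0 n m nm; rewrite (@big_cat_nat _ _ _ n 0 m _ _ (leq0n n) nm) /= lerDl.
by apply: sumr_ge0 => i _.
Qed.

Lemma sums_to_le (u : nat -> R) l : (forall t, 0 <= u t) -> sums_to u l ->
  forall n, \sum_(0 <= t < n) u t <= l.
Proof.
move=> u0 H n.
have := nondecreasing_cvgn_le (@psum_nd u u0) (cvgP _ H) n.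
by rewrite (cvg_lim _ H).
Qed.

Lemma sums_to0 (u : nat -> R) : (forall t, 0 <= u t) -> sums_to u 0 ->
  forall t, u t = 0.
Proof.
move=> u0 H t; apply/eqP; rewrite eq_le u0 andbT.
have := @sums_to_le u 0 u0 H t.+1; rewrite big_nat_recr //=.
have : 0 <= \sum_(0 <= s < t) u s by apply: sumr_ge0.
lra.
Qed.

End Aux.

Section Main.
Variable R : realType.
Variable A : finType.
Variables (p pt : A -> R) (q : A -> nat -> R).
Hypothesis Hp : forall a, 0 < p a.
Hypothesis Hpt : forall a, 0 < pt a.
Hypothesis Hq0 : forall a t, 0 <= q a t.

Let c a := p a / pt a.
Let P t := outdist p q t.
Let Q t := outdist pt q t.
Let g t := P t * ln (P t / Q t).
Let k1 a := p a * ln (c a).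
Let h t := \sum_(a : A) k1 a * q a t.
Let e t := h t - g t.

Lemma c_gt0 a : 0 < c a.
Proof. by rewrite /c divr_gt0. Qed.

Lemma P_ge0 t : 0 <= P t.
Proof. by apply: sumr_ge0 => a _; rewrite mulr_ge0 // ltW. Qed.

Lemma Q_ge0 t : 0 <= Q t.
Proof. by apply: sumr_ge0 => a _; rewrite mulr_ge0 // ltW. Qed.

Lemma P0q t : ~ (0 < P t) -> forall a, q a t = 0.
Proof.
move=> hP a.
have P0 : P t = 0 by apply/eqP; rewrite eq_le P_ge0 andbT leNgt; apply/negP.
have := psumr_eq0P (fun b _ => mulr_ge0 (ltW (Hp b)) (Hq0 b t)) P0 (erefl true).
by move=> /(_ a) /eqP; rewrite mulf_eq0 gt_eqF //= => /eqP.
Qed.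

Lemma Pex t : 0 < P t -> exists a, 0 < q a t.
Proof.
move=> hP; apply: contrapT => hn.
have : forall a, q a t = 0.
  move=> a; apply/eqP; rewrite eq_le Hq0 andbT leNgt; apply/negP => h'.
  by apply: hn; exists a.
move=> h0; move: hP; rewrite /P /outdist big1 ?ltxx // => a _.
by rewrite h0 mulr0.
Qed.

Lemma le_term (F : A -> R) (B : {pred A}) a : (forall b, 0 <= F b) -> a \in B ->
  F a <= \sum_(b in B) F b.
Proof.
by move=> F0 aB; rewrite (bigD1 a) //= lerDl; apply: sumr_ge0.
Qed.

Lemma qP t a : 0 < q a t -> 0 < P t.
Proof.
move=> qa; apply: lt_le_trans (_ : p a * q a t <= P t).
  by rewrite mulr_gt0.
have := @le_term (fun b => p b * q b t) predT a.
by apply => // b; rewrite mulr_ge0 // ltW.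
Qed.

Lemma PQ t : 0 < P t -> 0 < Q t.
Proof.
move=> /Pex [a qa]; apply: lt_le_trans (_ : pt a * q a t <= Q t).
  by rewrite mulr_gt0.
have := @le_term (fun b => pt b * q b t) predT a.
by apply => // b; rewrite mulr_ge0 // ltW.
Qed.

Lemma e_P0 t : ~ (0 < P t) -> e t = 0.
Proof.
move=> hP; have q0 := P0q hP.
rewrite /e /g /h big1 => [|a _]; last by rewrite q0 mulr0.
have -> : P t = 0 by rewrite /P /outdist big1 // => a _; rewrite q0 mulr0.
by rewrite mul0r subr0.
Qed.

Lemma e_expr t : 0 < P t ->
  e t = \sum_(a : A) (p a * q a t) * phiL ((P t / Q t) / c a).
Proof.
move=> hP; have hQ := PQ hP.
set r := P t / Q t.
have r0 : 0 < r by rewrite divr_gt0.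
rewrite (eq_bigr (fun a => r * (pt a * q a t) - p a * q a t
   - p a * q a t * ln r + k1 a * q a t)); last first.
  move=> a _; rewrite /phiL ln_div ?posrE ?c_gt0 // /k1 /c.
  have := Hp a; have := Hpt a => ha hb.
  field; apply/andP; split; rewrite gt_eqF //.
rewrite !big_split /= !sumrN -!mulr_sumr -!mulr_suml.
rewrite /e /g /h -/(outdist pt q t) -/(outdist p q t) -/(P t) -/(Q t) /r.
have : Q t != 0 by rewrite gt_eqF.
move=> Qn0; rewrite divfK //; ring.
Qed.

Lemma e_ge0 t : 0 <= e t.
Proof.
case: (pselect (0 < P t)) => hP; last by rewrite e_P0.
have hQ := PQ hP.
rewrite e_expr //; apply: sumr_ge0 => a _.
rewrite mulr_ge0 ?mulr_ge0 ?(ltW (Hp a)) //.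
by apply: phiL_ge0; rewrite !divr_gt0 ?c_gt0.
Qed.

Lemma e0_const t : e t = 0 -> 0 < P t ->
  forall a, 0 < q a t -> c a = P t / Q t.
Proof.
move=> e0 hP; have hQ := PQ hP.
move: e0; rewrite e_expr // => e0 a qa.
have F0 : forall b, true -> 0 <= p b * q b t * phiL (P t / Q t / c b).
  move=> b _; rewrite mulr_ge0 ?mulr_ge0 ?(ltW (Hp b)) //.
  by apply: phiL_ge0; rewrite !divr_gt0 ?c_gt0.
have := @psumr_eq0P _ _ _ _ F0 e0 a isT.
move/eqP; rewrite mulf_eq0 mulf_eq0 (gt_eqF (Hp a)) (gt_eqF qa) /= => /eqP.
move/phiL_eq0; rewrite !divr_gt0 ?c_gt0 // => /(_ isT) h1.
have cn : c a != 0 by rewrite gt_eqF ?c_gt0.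
by rewrite -(divfK cn (P t / Q t)) h1 mul1r.
Qed.

Lemma const_e0 t : (0 < P t -> forall a b, 0 < q a t -> 0 < q b t -> c a = c b) ->
  e t = 0.
Proof.
move=> hc; case: (pselect (0 < P t)) => hP; last by rewrite e_P0.
have hQ := PQ hP; have [a0 qa0] := Pex hP.
have hr : P t / Q t = c a0.
  have -> : P t = c a0 * Q t.
    rewrite /P /outdist /Q /outdist mulr_sumr; apply: eq_bigr => a _.
    have [qa|] := ltP 0 (q a t).
      by rewrite (hc hP a0 a qa0 qa) /c mulrA divfK // gt_eqF.
    move=> qle; have -> : q a t = 0 by apply/eqP; rewrite eq_le qle Hq0.
    by rewrite !mulr0.
  by rewrite mulfK // gt_eqF.
rewrite e_expr // big1 // => a _.
have [qa|] := ltP 0 (q a t).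
  by rewrite hr (hc hP a0 a qa0 qa) divff ?gt_eqF ?c_gt0 // /phiL ln1 !subrr mulr0.
move=> qle; have -> : q a t = 0 by apply/eqP; rewrite eq_le qle Hq0.
by rewrite mulr0 mul0r.
Qed.

Lemma e_le t : e t <= h t + Q t.
Proof.
have hP0 := P_ge0 t; have hQ0 := Q_ge0 t.
suff hg : P t - Q t <= g t by rewrite /e; lra.
case: (pselect (0 < P t)) => hP; last first.
  rewrite /g; have -> : P t = 0 by apply/eqP; rewrite eq_le hP0 andbT leNgt; apply/negP.
  by rewrite mul0r; lra.
have hQ := PQ hP.
have hl := le_ln_sub1 (divr_gt0 hQ hP).
have hln : ln (P t / Q t) = - ln (Q t / P t).
  by rewrite -lnV ?posrE ?divr_gt0 // invf_div.
have : P t * (1 - Q t / P t) <= g t.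
  by rewrite /g hln ler_wpM2l //; lra.
have -> : P t * (1 - Q t / P t) = P t - Q t.
  by field; rewrite gt_eqF.
done.
Qed.

Hypothesis Hq1 : forall a, sums_to (q a) 1.

Let S a n := \sum_(0 <= t < n) q a t.

Lemma S_ge0 a n : 0 <= S a n.
Proof. by apply: sumr_ge0. Qed.

Lemma S_le1 a n : S a n <= 1.
Proof. exact: (@sums_to_le _ (q a) 1 (Hq0 a) (Hq1 a) n). Qed.

Lemma exch (k : A -> R) n :
  \sum_(0 <= t < n) \sum_(a : A) k a * q a t = \sum_(a : A) k a * S a n.
Proof.
rewrite exchange_big /=; apply: eq_bigr => a _.
by rewrite /S mulr_sumr.
Qed.

Lemma exch_cvg (k : A -> R) :
  ((fun n => \sum_(0 <= t < n) \sum_(a : A) k a * q a t) @ \oo -->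
     \sum_(a : A) k a)%classic.
Proof.
under eq_fun do rewrite exch.
have -> : \sum_(a : A) k a = \sum_(a : A) k a * 1.
  by apply: eq_bigr => a _; rewrite mulr1.
apply: cvg_bigsum => a _.
exact: cvgMr (Hq1 a).
Qed.

Let Lam := \sum_(a : A) k1 a.
Let E n := \sum_(0 <= t < n) e t.

Lemma E_nd : {homo E : n m / (n <= m)%N >-> n <= m}.
Proof. exact: psum_nd e_ge0. Qed.

Lemma E_bd n : E n <= \sum_(a : A) `|k1 a + pt a|.
Proof.
apply: le_trans (_ : \sum_(0 <= t < n) (h t + Q t) <= _).
  by apply: ler_sum => t _; exact: e_le.
have -> : \sum_(0 <= t < n) (h t + Q t) =
          \sum_(0 <= t < n) \sum_(a : A) (k1 a + pt a) * q a t.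
  apply: eq_bigr => t _; rewrite /h /Q /outdist -big_split /=.
  by apply: eq_bigr => a _; rewrite mulrDl.
rewrite exch; apply: ler_sum => a _.
apply: le_trans (_ : `|(k1 a + pt a) * S a n| <= _); first exact: ler_norm.
rewrite normrM (ger0_norm (S_ge0 a n)).
by rewrite -[X in _ <= X]mulr1 ler_wpM2l // S_le1.
Qed.

Lemma E_cvg : cvgn E.
Proof.
apply: nondecreasing_is_cvgn; first exact: E_nd.
by exists (\sum_(a : A) `|k1 a + pt a|) => _ [n _ <-]; exact: E_bd.
Qed.

Let El := limn E.

Lemma El_ge0 : 0 <= El.
Proof.
have := nondecreasing_cvgn_le E_nd E_cvg 0.
by rewrite /E big_geq.
Qed.

Lemma G_cvg : ((fun n => \sum_(0 <= t < n) g t) @ \oo --> Lam - El)%classic.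
Proof.
have -> : (fun n => \sum_(0 <= t < n) g t) =
    (fun n => \sum_(0 <= t < n) h t - E n).
  apply: funext => n; rewrite /E -sumrB; apply: eq_bigr => t _.
  by rewrite /e opprB addrC subrK.
apply: cvgB; last exact: E_cvg.
exact: exch_cvg.
Qed.

Lemma KLnat_val : KLnat (outdist p q) (outdist pt q) = (Lam - El)%:E.
Proof.
rewrite /KLnat.
have -> : (fun n => (\sum_(0 <= t < n) klterm (outdist p q t) (outdist pt q t))%E)
   = EFin \o (fun n => \sum_(0 <= t < n) g t).
  apply: funext => n /=; rewrite -sumEFin; apply: eq_bigr => t _.
  rewrite /klterm -/(P t) -/(Q t).
  case: (pselect (0 < P t)) => hP.
    by rewrite gt_eqF // gt_eqF ?PQ.
  rewrite /g; have -> : P t = 0.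
    by apply/eqP; rewrite eq_le P_ge0 andbT leNgt; apply/negP.
  by rewrite eqxx mul0r.
rewrite EFin_lim; last exact: cvgP G_cvg.
by rewrite (cvg_lim _ G_cvg).
Qed.

Lemma KL_val : KL p pt = Lam%:E.
Proof.
rewrite /KL /Lam -sumEFin; apply: eq_bigr => a _.
by rewrite /klterm !gt_eqF.
Qed.

Lemma El0 : El = 0 <-> forall t, e t = 0.
Proof.
split=> [h0 t|h0].
  have := nondecreasing_cvgn_le E_nd E_cvg t.+1.
  rewrite -/El h0 /E big_nat_recr //=.
  have : 0 <= \sum_(0 <= s < t) e s by apply: sumr_ge0 => s _; exact: e_ge0.
  have := e_ge0 t; lra.
rewrite /El; have -> : E = fun _ => 0.
  by apply: funext => n; rewrite /E big1 // => t _.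
exact: lim_cst.
Qed.

Lemma simr_c a b : simr p pt a b = (c a == c b).
Proof. by rewrite /simr /c eqr_div // gt_eqF. Qed.

Definition condii := forall t, 0 < outdist p q t ->
      exists2 Aj, Aj \in blocks p pt & supp_at q t \subset Aj.

Lemma ii_of_e0 : (forall t, e t = 0) -> condii.
Proof.
move=> h0 t hP; have [a0 qa0] := Pex hP.
exists [set a' | simr p pt a0 a']; first by apply/imsetP; exists a0.
apply/fintype.subsetP => a; rewrite !inE => qa.
by rewrite simr_c (e0_const (h0 t) hP qa0) (e0_const (h0 t) hP qa).
Qed.

Lemma e0_of_ii : condii -> forall t, e t = 0.
Proof.
move=> Hii t; apply: const_e0 => hP a b qa qb.
have [Aj /imsetP [a0 _ ->] sub] := Hii t hP.
have := fintype.subsetP sub a; have := fintype.subsetP sub b; rewrite !inE.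
move=> /(_ qb); rewrite simr_c => /eqP <-.
by move=> /(_ qa); rewrite simr_c => /eqP <-.
Qed.

Lemma part1 : (KLnat (outdist p q) (outdist pt q) <= KL p pt)%E.
Proof. rewrite KLnat_val KL_val lee_fin; have := El_ge0; lra. Qed.

Lemma part2 : KLnat (outdist p q) (outdist pt q) = KL p pt <-> condii.
Proof.
rewrite KLnat_val KL_val; split.
  by case=> h0; apply: ii_of_e0; apply/El0; lra.
move=> /e0_of_ii /El0 ->; by rewrite subr0.
Qed.

Lemma block_eq B1 B2 a : B1 \in blocks p pt -> B2 \in blocks p pt ->
  a \in B1 -> a \in B2 -> B1 = B2.
Proof.
move=> /imsetP [a1 _ ->] /imsetP [a2 _ ->]; rewrite !inE !simr_c.
move=> /eqP h1 /eqP h2; apply/setP => x; rewrite !inE !simr_c.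
by rewrite h1 h2.
Qed.

Lemma qbar_ge0 (B : {set A}) t : 0 <= qbar p q B t.
Proof.
rewrite /qbar divr_ge0 //; apply: sumr_ge0 => a _.
  by rewrite mulr_ge0 // ltW.
exact: ltW.
Qed.

Lemma qbar_gt0 (B : {set A}) t a : a \in B -> 0 < q a t -> 0 < qbar p q B t.
Proof.
move=> aB qa; rewrite /qbar divr_gt0 //.
  apply: lt_le_trans (_ : q a t * p a <= _); first by rewrite mulr_gt0.
  apply: (@le_term (fun b => q b t * p b) (mem B)) => // b.
  by rewrite mulr_ge0 // ltW.
apply: lt_le_trans (_ : p a <= _); first exact: Hp.
apply: (@le_term p (mem B)) => // b; exact: ltW.
Qed.

Lemma qbar_ne0 (B : {set A}) t : qbar p q B t != 0 ->
  exists2 a, a \in B & 0 < q a t.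
Proof.
move=> hne; apply: contrapT => hn; move: hne; rewrite /qbar big1 ?mul0r ?eqxx //.
move=> a aB; have : ~ (0 < q a t) by move=> qa; apply: hn; exists a.
move=> nqa; have -> : q a t = 0.
  by apply/eqP; rewrite eq_le Hq0 andbT leNgt; apply/negP.
by rewrite mul0r.
Qed.

Lemma qbar_sums B : B \in blocks p pt -> sums_to (qbar p q B) 1.
Proof.
move=> /imsetP [a0 _ ->]; set B0 := [set a' | simr p pt a0 a'].
have a0B : a0 \in B0 by rewrite inE simr_c.
have D0 : 0 < \sum_(a in B0) p a.
  apply: lt_le_trans (_ : p a0 <= _); first exact: Hp.
  apply: (@le_term p (mem B0)) => // b; exact: ltW.
rewrite /sums_to /qbar.
have -> : (fun n => \sum_(0 <= t < n) ((\sum_(a in B0) q a t * p a) / \sum_(a in B0) p a))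
  = (fun n => (\sum_(a in B0) S a n * p a) * (\sum_(a in B0) p a)^-1).
  apply: funext => n; rewrite -mulr_suml exchange_big /=; congr (_ * _).
  by apply: eq_bigr => a _; rewrite /S mulr_suml.
have -> : (1 : R) = (\sum_(a in B0) 1 * p a) * (\sum_(a in B0) p a)^-1.
  rewrite -[RHS]mulr1; under eq_bigr do rewrite mul1r.
  by rewrite mulr1 divff // gt_eqF.
apply: cvgMl; apply: cvg_bigsum => a _.
exact: cvgMl (Hq1 a).
Qed.

Lemma cong_of_ii (a0 : A) : condii -> congruent_on (blocks p pt) (qbar p q).
Proof.
move=> Hii; set B0 := [set a' | simr p pt a0 a'].
have hB0 : B0 \in blocks p pt by apply/imsetP; exists a0.
pose f t := odflt B0 [pick B in blocks p pt | supp_at q t \subset B].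
exists f; split.
  by move=> t; rewrite /f; case: pickP => [B /andP [] //|_].
move=> B B' hB hB'.
have key : forall s, qbar p q B s != 0 -> f s = B.
  move=> s /qbar_ne0 [a aB qa]; have hP := qP qa.
  have [Aj hAj sub] := Hii s hP.
  rewrite /f; case: pickP => [B1 /andP [hB1 sub1] | hn] /=.
    by apply: (block_eq hB1 hB _ aB); apply: (fintype.subsetP sub1); rewrite inE.
  by have := hn Aj; rewrite hAj sub.
have -> : (fun s => if f s == B' then qbar p q B s else 0) =
          (fun s => if B == B' then qbar p q B s else 0).
  apply: funext => s; have [->|hne] := eqVneq (qbar p q B s) 0.
    by case: ifP; case: ifP.
  by rewrite (key s hne).
have [eBB|nBB] := eqVneq B B'; first exact: qbar_sums.
rewrite /sums_to; under eq_fun do rewrite big1 //.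
exact: cvg_cst.
Qed.

Lemma ii_of_cong : congruent_on (blocks p pt) (qbar p q) -> condii.
Proof.
move=> [f [hf hs]] t hP; exists (f t); first exact: hf.
apply/fintype.subsetP => a; rewrite !inE => qa.
set B := [set a' | simr p pt a a'].
have hB : B \in blocks p pt by apply/imsetP; exists a.
have aB : a \in B by rewrite inE simr_c.
have [eB|nB] := eqVneq B (f t); first by rewrite -eB.
have := hs B (f t) hB (hf t); rewrite (negbTE nB) => hs0.
have u0 : forall s, 0 <= (if f s == f t then qbar p q B s else 0).
  by move=> s; case: ifP => _ //; exact: qbar_ge0.
have := sums_to0 u0 hs0 t; rewrite eqxx => h0.
by have := qbar_gt0 aB qa; rewrite h0 ltxx.
Qed.

End Main.

Theorem lemma7 (R : realType) (A : finType) (d : nat) (nu : A -> R)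
    (phi : 'I_d -> A -> R) (p pt : A -> R) (q : A -> nat -> R) :
  (forall a, 0 < nu a) ->
  is_dist p -> (forall a, 0 < p a) ->
  in_closure (in_expfam nu phi) pt ->
  (forall r, in_closure (in_expfam nu phi) r -> (KL p pt <= KL p r)%E) ->
  (forall a, 0 < pt a) ->
  is_channel q ->
  (KLnat (outdist p q) (outdist pt q) <= KL p pt)%E /\
  (KLnat (outdist p q) (outdist pt q) = KL p pt <->
   (forall t, 0 < outdist p q t ->
      exists2 Aj, Aj \in blocks p pt & supp_at q t \subset Aj)) /\
  ((forall t, 0 < outdist p q t ->
      exists2 Aj, Aj \in blocks p pt & supp_at q t \subset Aj) <->
   congruent_on (blocks p pt) (qbar p q)).
Proof.
move=> _ [_ hsum] Hp _ _ Hpt Hch.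
have Hq0 : forall a t, 0 <= q a t by move=> a t; case: (Hch a) => h _; exact: h.
have Hq1 : forall a, sums_to (q a) 1 by move=> a; case: (Hch a).
split; first exact: part1.
split; first exact: part2.
case: (pickP (@predT A)) => [a0 _|hn]; last first.
  by move: hsum; rewrite big_pred0 // => /eqP; rewrite eq_sym oner_eq0.
split; first exact: cong_of_ii.
exact: ii_of_cong.
Qed.
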